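(* Assume $\mathsf{MA}(\sigma\text{-centered})$. Let $\kappa<\mathfrak{c}$ be a cardinal. Suppose that $A_\alpha$ and $B_\alpha$ are countable dense subsets of $2^\omega$ for each $\alpha<\kappa$, and that $A_\alpha\cap A_\beta=\varnothing$ and $B_\alpha\cap B_\beta=\varnothing$ whenever $\alpha<\beta<\kappa$. Then there exists a homeomorphism $f:2^\omega\to 2^\omega$ such that $f[A_\alpha]=B_\alpha$ for every $\alpha<\kappa$.
   Context: $2^\omega$ is the Cantor set. $\mathsf{MA}(\sigma\text{-centered})$ is Martin's Axiom restricted to $\sigma$-centered posets: for every $\sigma$-centered poset and every family of fewer than $\mathfrak{c}$ dense subsets of it there is a filter meeting all of them. *)

(* Defs.v *)
From Stdlib Require Import List.
Import ListNotations.

Definition Cantor : Type := nat -> bool.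

Definition agree (n : nat) (x y : Cantor) : Prop :=
  forall k, k < n -> x k = y k.

Definition continuous (f : Cantor -> Cantor) : Prop :=
  forall (x : Cantor) (n : nat), exists m : nat,
    forall y : Cantor, agree m x y -> agree n (f x) (f y).

Definition homeomorphism (f : Cantor -> Cantor) : Prop :=
  exists g : Cantor -> Cantor,
    (forall x, g (f x) = x) /\ (forall y, f (g y) = y) /\
    continuous f /\ continuous g.

Definition dense (D : Cantor -> Prop) : Prop :=
  forall (s : Cantor) (n : nat), exists x, D x /\ agree n x s.

Definition countable (D : Cantor -> Prop) : Prop :=
  exists e : nat -> Cantor, forall x, D x -> exists n, e n = x.

Definition image (f : Cantor -> Cantor) (A : Cantor -> Prop) : Cantor -> Prop :=
  fun y => exists x, A x /\ f x = y.

(** |T| < c : T injects into 2^omega, but 2^omega does not inject into T. *)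
Definition lt_continuum (T : Type) : Prop :=
  (exists f : T -> Cantor, forall a b, f a = f b -> a = b) /\
  ~ (exists g : Cantor -> T, forall x y, g x = g y -> x = y).

(** Forcing posets: p <= q means p is stronger than q. *)
Definition is_poset (P : Type) (le : P -> P -> Prop) : Prop :=
  (forall p, le p p) /\
  (forall p q, le p q -> le q p -> p = q) /\
  (forall p q r, le p q -> le q r -> le p r).

Definition centered (P : Type) (le : P -> P -> Prop) (C : P -> Prop) : Prop :=
  forall l : list P, (forall p, In p l -> C p) ->
    exists r, forall p, In p l -> le r p.

Definition sigma_centered (P : Type) (le : P -> P -> Prop) : Prop :=
  exists C : nat -> P -> Prop,
    (forall p, exists n, C n p) /\ (forall n, centered P le (C n)).

Definition dense_in (P : Type) (le : P -> P -> Prop) (D : P -> Prop) : Prop :=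
  forall p, exists q, D q /\ le q p.

Definition is_filter (P : Type) (le : P -> P -> Prop) (G : P -> Prop) : Prop :=
  (exists p, G p) /\
  (forall p q, G p -> le p q -> G q) /\
  (forall p q, G p -> G q -> exists r, G r /\ le r p /\ le r q).

Definition MA_sigma_centered : Prop :=
  forall (P : Type) (le : P -> P -> Prop),
    inhabited P -> is_poset P le -> sigma_centered P le ->
    forall (J : Type) (D : J -> P -> Prop),
      lt_continuum J -> (forall j, dense_in P le (D j)) ->
      exists G : P -> Prop, is_filter P le G /\
        forall j, exists p, G p /\ D j p.

(* Main.v *)
Require Import Defs.
From Stdlib Require Import List Arith Lia Classical ClassicalEpsilon FunctionalExtensionality PropExtensionality ProofIrrelevance.
From Stdlib Require Cantor.
From mathcomp Require choice.
Import ListNotations.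

Definition pre (x : Cantor) (n : nat) : list bool := map x (seq 0 n).

Lemma pre_nth x n k : k < n -> nth k (pre x n) false = x k.
Proof.
  intro H. unfold pre.
  rewrite nth_indep with (d' := x 0) by (rewrite length_map, length_seq; lia).
  rewrite map_nth, seq_nth by lia. reflexivity.
Qed.

Lemma agree_pre n x y : agree n x y <-> pre x n = pre y n.
Proof.
  split.
  - intro H. unfold pre. apply map_ext_in. intros k Hk. apply in_seq in Hk. apply H; lia.
  - intros H k Hk. rewrite <- (pre_nth x n k Hk), <- (pre_nth y n k Hk). now rewrite H.
Qed.

Lemma agree_refl n x : agree n x x.
Proof. intros k _; reflexivity. Qed.
Lemma agree_sym n x y : agree n x y -> agree n y x.
Proof. intros H k Hk; symmetry; auto. Qed.
Lemma agree_trans n x y z : agree n x y -> agree n y z -> agree n x z.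
Proof. intros H1 H2 k Hk; rewrite H1; auto. Qed.
Lemma agree_mono m n x y : m <= n -> agree n x y -> agree m x y.
Proof. intros Hm H k Hk; apply H; lia. Qed.

Lemma agree_dec n x y : {agree n x y} + {~ agree n x y}.
Proof.
  destruct (list_eq_dec Bool.bool_dec (pre x n) (pre y n)) as [e|e].
  - left; now apply agree_pre.
  - right; intro H; apply e; now apply agree_pre.
Qed.

Definition ext (s : list bool) : Cantor := fun k => nth k s false.

Lemma agree_ext_pre n x : agree n (ext (pre x n)) x.
Proof. intros k Hk. unfold ext. now apply pre_nth. Qed.

Fixpoint allstr (n : nat) : list (list bool) :=
  match n with
  | 0 => [[]]
  | S n => flat_map (fun s => [s ++ [false]; s ++ [true]]) (allstr n)
  end.

Lemma pre_S x n : pre x (S n) = pre x n ++ [x n].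
Proof. unfold pre. rewrite seq_S, map_app. reflexivity. Qed.

Lemma in_allstr x n : In (pre x n) (allstr n).
Proof.
  induction n; simpl. now left.
  apply in_flat_map. exists (pre x n). split; auto.
  rewrite pre_S. destruct (x n); simpl; auto.
Qed.

Lemma map_eq_in {A B} (f g : A -> B) l a : map f l = map g l -> In a l -> f a = g a.
Proof.
  induction l; simpl; intros H Hin; [contradiction|].
  injection H; intros; destruct Hin; subst; auto.
Qed.

Lemma sepl (x : Cantor) (l : list Cantor) :
  exists m, forall x', In x' l -> agree m x x' -> x = x'.
Proof.
  induction l as [|z l IH].
  - exists 0; intros _ [].
  - destruct IH as [m1 Hm1].
    destruct (classic (x = z)) as [e|ne].
    + exists m1. intros x' [<-|H] Ha; auto.
    + assert (exists k, x k <> z k) as [k Hk].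
      { apply NNPP; intro H. apply ne, functional_extensionality. intro k.
        apply NNPP; intro H'. apply H; eauto. }
      exists (max m1 (S k)). intros x' [<-|H] Ha.
      * exfalso; apply Hk, Ha; lia.
      * apply Hm1; auto. eapply agree_mono; [|eauto]; lia.
Qed.

Lemma sep (l : list Cantor) :
  exists m, forall x x', In x l -> In x' l -> agree m x x' -> x = x'.
Proof.
  induction l as [|z l IH].
  - exists 0; intros x x' [].
  - destruct IH as [m1 Hm1]. destruct (sepl z l) as [m2 Hm2].
    exists (max m1 m2). intros x x' [<-|Hx] [<-|Hx'] Ha; auto.
    + apply Hm2; auto. eapply agree_mono; [|eauto]; lia.
    + symmetry. apply Hm2; auto. apply agree_sym. eapply agree_mono; [|eauto]; lia.
    + apply Hm1; auto. eapply agree_mono; [|eauto]; lia.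
Qed.

Lemma dense_avoid (D : Cantor -> Prop) : dense D ->
  forall (l : list Cantor) s n, exists x, D x /\ agree n x s /\ ~ In x l.
Proof.
  intros HD l s n.
  set (t := fun k => if k <? n then s k else negb (nth (k - n) l (fun _ => false) k)).
  destruct (HD t (n + length l)) as [x [Dx Ax]].
  exists x. split; [auto|split].
  - intros k Hk. rewrite Ax by lia. unfold t. destruct (Nat.ltb_spec k n); [auto|lia].
  - intro Hin. destruct (In_nth l x (fun _ => false) Hin) as [i [Hi Hx]].
    specialize (Ax (n + i) ltac:(lia)). unfold t in Ax.
    destruct (Nat.ltb_spec (n+i) n); [lia|].
    replace (n + i - n) with i in Ax by lia. rewrite Hx in Ax.
    destruct (x (n+i)); discriminate.
Qed.

Definition lvl (n : nat) (phi : Cantor -> Cantor) : Prop :=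
  (forall x x', agree n x x' -> phi x = phi x') /\
  (forall x k, n <= k -> phi x k = false) /\
  (forall y, exists x, agree n (phi x) y) /\
  (forall x x', agree n (phi x) (phi x') -> agree n x x').

Definition nm (m : nat) (b : Cantor) : Cantor := fun k => if k <? m then b k else false.
Lemma agree_nm m b : agree m (nm m b) b.
Proof. intros k Hk; unfold nm; destruct (Nat.ltb_spec k m); auto; lia. Qed.

Lemma lift_lvl n m phi : n <= m -> lvl n phi ->
  exists psi, lvl m psi /\ forall x, agree n (psi x) (phi x).
Proof.
  intros Hnm [V1 [V2 [V3 V4]]].
  exists (fun x k => if k <? n then phi x k else if k <? m then x k else false).
  split; [split; [|split; [|split]]|].
  - intros x x' H. apply functional_extensionality; intro k.
    rewrite (V1 x x') by (eapply agree_mono; [|eauto]; lia).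
    destruct (Nat.ltb_spec k n); auto. destruct (Nat.ltb_spec k m); auto.
  - intros x k Hk. destruct (Nat.ltb_spec k n); [lia|]. destruct (Nat.ltb_spec k m); [lia|auto].
  - intro y. destruct (V3 y) as [x Hx].
    exists (fun k => if k <? n then x k else y k).
    assert (E : phi (fun k => if k <? n then x k else y k) = phi x).
    { apply V1. intros k Hk. destruct (Nat.ltb_spec k n); [auto|lia]. }
    rewrite E. intros k Hk. destruct (Nat.ltb_spec k n); auto.
    destruct (Nat.ltb_spec k m); auto; lia.
  - intros x x' H. intros k Hk.
    assert (agree n x x') as Hn.
    { apply V4. intros j Hj. specialize (H j ltac:(lia)). simpl in H.
      destruct (Nat.ltb_spec j n); [auto|lia]. }
    destruct (Nat.ltb_spec k n); auto.
    specialize (H k Hk). simpl in H. destruct (Nat.ltb_spec k n); [lia|].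
    destruct (Nat.ltb_spec k m); auto; lia.
  - intros x k Hk. destruct (Nat.ltb_spec k n); auto; lia.
Qed.

Definition sw (m : nat) (c b z : Cantor) : Cantor :=
  if agree_dec m z c then nm m b else if agree_dec m z b then c else z.

Ltac agr := repeat match goal with
  | H : agree _ _ _ |- _ => apply agree_pre in H
  | |- agree _ _ _ => apply agree_pre
  | H : ~ agree _ _ _ |- _ => rewrite agree_pre in H
  end.

Lemma sw_step n m phi psi a b (L : list (Cantor * Cantor)) :
  n <= m -> lvl m psi -> (forall x, agree n (psi x) (phi x)) ->
  agree n (phi a) b ->
  (forall x y, In (x,y) L -> agree m (psi x) y) ->
  (forall x y, In (x,y) L -> (agree m x a -> x = a /\ y = b) /\ (agree m y b -> x = a /\ y = b)) ->
  exists psi', lvl m psi' /\ (forall x, agree n (psi' x) (phi x)) /\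
    (forall x y, In (x,y) ((a,b)::L) -> agree m (psi' x) y).
Proof.
  intros Hnm [V1 [V2 [V3 V4]]] Href Hab HL Hsep.
  set (c := psi a).
  assert (Hnmb := agree_nm m b).
  assert (Hc : forall z, agree m (sw m c b z) z \/ True) by auto.
  assert (swresp : forall z z', agree m z z' -> agree m (sw m c b z) (sw m c b z')).
  { intros z z' H. unfold sw.
    destruct (agree_dec m z c), (agree_dec m z' c); agr; try congruence;
    destruct (agree_dec m z b), (agree_dec m z' b); agr; try congruence. }
  assert (swinj : forall z z', agree m (sw m c b z) (sw m c b z') -> agree m z z').
  { intros z z' H. unfold sw in H.
    destruct (agree_dec m z c), (agree_dec m z' c); agr; try congruence;
    destruct (agree_dec m z b), (agree_dec m z' b); agr; try congruence. }
  assert (swinv : forall z, agree m (sw m c b (sw m c b z)) z).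
  { intro z. unfold sw at 2.
    destruct (agree_dec m z c) as [h1|h1].
    - unfold sw. destruct (agree_dec m (nm m b) c); agr; try congruence.
      destruct (agree_dec m (nm m b) b); agr; congruence.
    - destruct (agree_dec m z b) as [h2|h2].
      + unfold sw. destruct (agree_dec m c c) as [_|h]; [agr; congruence|].
        exfalso; apply h, agree_refl.
      + unfold sw. destruct (agree_dec m z c); [contradiction|].
        destruct (agree_dec m z b); [contradiction|]. apply agree_refl. }
  assert (Hcn : agree n c b).
  { eapply agree_trans; [apply Href|auto]. }
  exists (fun x => sw m c b (psi x)). split; [split; [|split; [|split]]|split].
  - intros x x' H. now rewrite (V1 x x' H).
  - intros x k Hk. unfold sw.
    destruct (agree_dec m (psi x) c). { unfold nm. destruct (Nat.ltb_spec k m); auto; lia. }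
    destruct (agree_dec m (psi x) b); unfold c; auto.
  - intro y. destruct (V3 (sw m c b y)) as [x Hx]. exists x.
    eapply agree_trans; [apply swresp; eauto|apply swinv].
  - intros x x' H. apply V4, swinj, H.
  - intro x. eapply agree_trans; [|apply Href].
    unfold sw. destruct (agree_dec m (psi x) c) as [h|h].
    + eapply agree_trans; [eapply agree_mono; [eauto|apply Hnmb]|].
      apply agree_sym. eapply agree_trans; [eapply agree_mono; [eauto|apply h]|]. auto.
    + destruct (agree_dec m (psi x) b) as [h'|h'].
      * eapply agree_trans; [apply Hcn|]. apply agree_sym, (agree_mono n m); auto.
      * apply agree_refl.
  - intros x y [E|Hin].
    + injection E as <- <-. unfold sw.
      destruct (agree_dec m (psi a) c) as [_|h]; auto. exfalso; apply h, agree_refl.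
    + specialize (HL x y Hin). destruct (Hsep x y Hin) as [S1 S2]. unfold sw.
      destruct (agree_dec m (psi x) c) as [h|h].
      * destruct (S1 (V4 _ _ h)) as [-> ->]. auto.
      * destruct (agree_dec m (psi x) b) as [h'|h'].
        -- assert (agree m y b) as hy by (eapply agree_trans; [apply agree_sym, HL|auto]).
           destruct (S2 hy) as [-> ->]. exfalso; apply h, agree_refl.
        -- auto.
Qed.

Definition PB (L : list (Cantor * Cantor)) : Prop :=
  forall x y x' y', In (x,y) L -> In (x',y') L -> (x = x' <-> y = y').

Lemma core_ext n phi (L : list (Cantor * Cantor)) m0 :
  lvl n phi -> (forall x y, In (x,y) L -> agree n (phi x) y) -> PB L ->
  exists m psi, m0 <= m /\ n <= m /\ lvl m psi /\ (forall x, agree n (psi x) (phi x)) /\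
    (forall x y, In (x,y) L -> agree m (psi x) y) /\
    (forall x y x' y', In (x,y) L -> In (x',y') L -> agree m x x' -> x = x' /\ y = y').
Proof.
  intros Hl HL HPB.
  destruct (sep (map fst L ++ map snd L)) as [m1 Hm1].
  set (m := max m0 (max n m1)).
  assert (Sx : forall x y x' y', In (x,y) L -> In (x',y') L -> agree m x x' -> x = x' /\ y = y').
  { intros x y x' y' H1 H2 Ha.
    assert (x = x') as ->.
    { apply Hm1.
      - apply in_or_app; left; apply in_map_iff; exists (x,y); auto.
      - apply in_or_app; left; apply in_map_iff; exists (x',y'); auto.
      - eapply agree_mono; [|eauto]; lia. }
    split; auto. now apply (HPB x' y x' y'). }
  assert (Sy : forall x y x' y', In (x,y) L -> In (x',y') L -> agree m y y' -> x = x' /\ y = y').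
  { intros x y x' y' H1 H2 Ha.
    assert (y = y') as ->.
    { apply Hm1.
      - apply in_or_app; right; apply in_map_iff; exists (x,y); auto.
      - apply in_or_app; right; apply in_map_iff; exists (x',y'); auto.
      - eapply agree_mono; [|eauto]; lia. }
    split; auto. now apply (HPB x y' x' y'). }
  destruct (lift_lvl n m phi ltac:(lia) Hl) as [psi0 [Hl0 Hr0]].
  assert (forall L', incl L' L -> exists psi, lvl m psi /\ (forall x, agree n (psi x) (phi x)) /\
    (forall x y, In (x,y) L' -> agree m (psi x) y)) as Main.
  { induction L' as [|[a b] L' IH]; intros Hinc.
    - exists psi0; split; [|split]; auto. intros x y [].
    - destruct IH as [psi [H1 [H2 H3]]]. { intros u Hu; apply Hinc; now right. }
      assert (Hab : In (a,b) L) by (apply Hinc; now left).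
      apply (sw_step n m phi psi a b L'); auto; try lia.
      intros x y Hin. assert (In (x,y) L) by (apply Hinc; now right).
      split; intro h; [apply (Sx x y a b)|apply (Sy x y a b)]; auto. }
  destruct (Main L (incl_refl _)) as [psi [H1 [H2 H3]]].
  exists m, psi. split; [lia|split; [lia|auto]].
Qed.

Definition enc (x : Cantor) (k : nat) : Cantor :=
  fun j => if j <? k then true else if j =? k then false else x (j - S k).

Lemma enc_inj x k x' k' : enc x k = enc x' k' -> x = x' /\ k = k'.
Proof.
  intro E.
  assert (k = k').
  { destruct (lt_eq_lt_dec k k') as [[h|h]|h]; auto.
    - assert (H := f_equal (fun f => f k) E). unfold enc in H. simpl in H.
      rewrite Nat.ltb_irrefl, Nat.eqb_refl in H. destruct (Nat.ltb_spec k k'); [discriminate|lia].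
    - assert (H := f_equal (fun f => f k') E). unfold enc in H. simpl in H.
      rewrite Nat.ltb_irrefl, Nat.eqb_refl in H. destruct (Nat.ltb_spec k' k); [discriminate|lia]. }
  subst k'. split; auto. apply functional_extensionality; intro t.
  assert (H := f_equal (fun f => f (S k + t)) E). unfold enc in H; cbv beta in H.
  destruct (Nat.ltb_spec (S k + t) k); [lia|]. destruct (Nat.eqb_spec (S k+t) k); [lia|].
  replace (S k + t - S k) with t in H by lia. exact H.
Qed.

Lemma lt_continuum_prod (K : Type) : lt_continuum K -> lt_continuum (K * nat).
Proof.
  intros [[i Hi] Hno]. split.
  - exists (fun p => enc (i (fst p)) (snd p)). intros [a k] [b k'] E. simpl in E.
    apply enc_inj in E as [E1 ->]. now rewrite (Hi a b E1).
  - intros [g Hg]. apply Hno.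
    set (E := fun (x : Cantor) (n : nat) (t : nat) => x (Cantor.to_nat (n, t))).
    assert (Esurj : forall z : nat -> Cantor, exists x, E x = z).
    { intro z. exists (fun j => let p := Cantor.of_nat j in z (fst p) (snd p)).
      apply functional_extensionality; intro n. apply functional_extensionality; intro t.
      unfold E. rewrite Cantor.cancel_of_to. reflexivity. }
    destruct (classic (exists n, forall z, exists x, snd (g x) = n /\ E x n = z)) as [[n Hn]|Hn].
    + exists (fun z => fst (g (proj1_sig (constructive_indefinite_description _ (Hn z))))).
      intros z z' H.
      destruct (constructive_indefinite_description _ (Hn z)) as [x [Hx1 Hx2]].
      destruct (constructive_indefinite_description _ (Hn z')) as [x' [Hx1' Hx2']].
      simpl in H. assert (g x = g x') as Hgx.
      { destruct (g x), (g x'); simpl in *; congruence. }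
      apply Hg in Hgx. subst. reflexivity.
    + exfalso.
      assert (H : forall n, exists z, ~ exists x, snd (g x) = n /\ E x n = z).
      { intro n. apply NNPP; intro h. apply Hn. exists n. intro z. apply NNPP; intro h'. apply h; eauto. }
      set (Z := fun n => proj1_sig (constructive_indefinite_description _ (H n))).
      destruct (Esurj Z) as [x Hx].
      assert (HZ := proj2_sig (constructive_indefinite_description _ (H (snd (g x))))).
      apply HZ. exists x. split; auto. rewrite Hx. reflexivity.
Qed.

Definition Dat := (nat * list (list bool) * list (list bool * nat * nat))%type.
Module PK.
Import choice.
Definition pk (d : Dat) : nat := choice.pickle d.
Lemma pk_inj d1 d2 : pk d1 = pk d2 -> d1 = d2.
Proof. intro H. pose proof (choice.pickleK d1) as H1. pose proof (choice.pickleK d2) as H2.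
unfold pk in H. rewrite H in H1. rewrite H1 in H2. injection H2. auto. Qed.
End PK.

Definition table n (phi : Cantor -> Cantor) := map (fun s => pre (phi (ext s)) n) (allstr n).

Lemma table_agree n phi1 phi2 : lvl n phi1 -> lvl n phi2 -> table n phi1 = table n phi2 ->
  forall x, agree n (phi1 x) (phi2 x).
Proof.
  intros [V1 _] [W1 _] E x.
  rewrite (V1 x (ext (pre x n))), (W1 x (ext (pre x n))) by (apply agree_sym, agree_ext_pre).
  apply agree_pre. exact (map_eq_in _ _ _ _ E (in_allstr x n)).
Qed.

Section Main.
Variable K : Type.
Variables A B : K -> Cantor -> Prop.
Hypothesis hA : forall a, countable (A a) /\ dense (A a).
Hypothesis hB : forall a, countable (B a) /\ dense (B a).
Hypothesis hAdisj : forall a b, a <> b -> forall x, A a x -> A b x -> False.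
Hypothesis hBdisj : forall a b, a <> b -> forall x, B a x -> B b x -> False.

Lemma colA a b x : A a x -> A b x -> a = b.
Proof. intros. apply NNPP; intro h; eapply hAdisj; eauto. Qed.
Lemma colB a b x : B a x -> B b x -> a = b.
Proof. intros. apply NNPP; intro h; eapply hBdisj; eauto. Qed.

Definition eA a : nat -> Cantor := proj1_sig (constructive_indefinite_description _ (proj1 (hA a))).
Definition eB a : nat -> Cantor := proj1_sig (constructive_indefinite_description _ (proj1 (hB a))).
Definition idxA a x := epsilon (inhabits 0) (fun n => eA a n = x).
Definition idxB a x := epsilon (inhabits 0) (fun n => eB a n = x).
Lemma idxA_spec a x : A a x -> eA a (idxA a x) = x.
Proof.
  intro H. unfold idxA. apply epsilon_spec.
  exact (proj2_sig (constructive_indefinite_description _ (proj1 (hA a))) x H).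
Qed.
Lemma idxB_spec a x : B a x -> eB a (idxB a x) = x.
Proof.
  intro H. unfold idxB. apply epsilon_spec.
  exact (proj2_sig (constructive_indefinite_description _ (proj1 (hB a))) x H).
Qed.

Definition valid (n : nat) (phi : Cantor -> Cantor) (F : Cantor -> Cantor -> Prop) : Prop :=
  lvl n phi /\ (exists l, forall x y, F x y <-> In (x,y) l) /\
  (forall x y, F x y -> exists a, A a x /\ B a y) /\
  (forall x y, F x y -> agree n (phi x) y) /\
  (forall x y x' y', F x y -> F x' y' -> agree n x x' -> x = x' /\ y = y').

Definition Cond := (nat * (Cantor -> Cantor) * (Cantor -> Cantor -> Prop))%type.
Definition P := {c : Cond | valid (fst (fst c)) (snd (fst c)) (snd c)}.
Definition nP (p : P) := fst (fst (proj1_sig p)).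
Definition phP (p : P) := snd (fst (proj1_sig p)).
Definition FP (p : P) := snd (proj1_sig p).
Lemma vP (p : P) : valid (nP p) (phP p) (FP p).
Proof. exact (proj2_sig p). Qed.
Definition mk n phi F (h : valid n phi F) : P := exist _ (n, phi, F) h.

Definition le (p q : P) : Prop :=
  nP q <= nP p /\ (forall x, agree (nP q) (phP p x) (phP q x)) /\ (forall x y, FP q x y -> FP p x y).

Lemma le_refl p : le p p.
Proof. split; [lia|split; auto]. intro; apply agree_refl. Qed.
Lemma le_trans p q r : le p q -> le q r -> le p r.
Proof.
  intros [a1 [b1 c1]] [a2 [b2 c2]]. split; [lia|split; auto].
  intro x. eapply agree_trans; [|apply b2]. eapply agree_mono; [|apply b1]; auto.
Qed.

Lemma poset : is_poset P le.
Proof.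
  split; [exact le_refl|split; [|exact le_trans]].
  intros [[[n phi] F] hp] [[[n' phi'] F'] hq] [a1 [b1 c1]] [a2 [b2 c2]].
  unfold nP, phP, FP in *; simpl in *.
  assert (n = n') as <- by lia.
  assert (phi = phi') as <-.
  { apply functional_extensionality; intro x. apply functional_extensionality; intro k.
    destruct (Nat.lt_ge_cases k n). apply b1; auto.
    destruct hp as [[_ [V2 _]] _]. destruct hq as [[_ [W2 _]] _]. rewrite V2, W2; auto. }
  assert (F = F') as <-.
  { apply functional_extensionality; intro x. apply functional_extensionality; intro y.
    apply propositional_extensionality; split; auto. }
  f_equal. apply proof_irrelevance.
Qed.

Lemma valid0 : valid 0 (fun _ _ => false) (fun _ _ => False).
Proof.
  split; [split; [|split; [|split]]|split; [|split; [|split]]].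
  - auto.
  - auto.
  - intros y; exists y; intros k Hk; lia.
  - intros x x' _ k Hk; lia.
  - exists []; simpl; tauto.
  - tauto.
  - tauto.
  - tauto.
Qed.
Definition p0 : P := mk 0 _ _ valid0.

Lemma F_PB p x y x' y' : FP p x y -> FP p x' y' -> (x = x' <-> y = y').
Proof.
  destruct (vP p) as [[V1 [V2 [V3 V4]]] [_ [_ [V7 V8]]]]. intros H1 H2. split.
  - intros <-. apply (V8 x y x y'); auto. apply agree_refl.
  - intros <-. apply (V8 x y x' y); auto. apply V4.
    eapply agree_trans; [apply V7; eauto|apply agree_sym; auto].
Qed.

Lemma cond_ext p (L0 : list (Cantor * Cantor)) m0 :
  (forall x y, In (x,y) L0 -> (exists a, A a x /\ B a y) /\ agree (nP p) (phP p x) y) ->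
  (forall x y x' y', (FP p x y \/ In (x,y) L0) -> (FP p x' y' \/ In (x',y') L0) -> (x = x' <-> y = y')) ->
  exists q, le q p /\ m0 <= nP q /\ forall x y, In (x,y) L0 -> FP q x y.
Proof.
  intros H0 HPB.
  destruct (vP p) as [Hl [[l Hw] [V6 [V7 V8]]]].
  assert (HW : forall x y, FP p x y \/ In (x,y) L0 <-> In (x,y) (l ++ L0)).
  { intros x y. rewrite in_app_iff, Hw. tauto. }
  assert (C1 : forall x y, In (x,y) (l ++ L0) -> agree (nP p) (phP p x) y).
  { intros x y Hin. apply HW in Hin as [h|h]; [auto|apply H0; auto]. }
  assert (C2 : PB (l ++ L0)).
  { intros x y x' y' h1 h2. apply HPB; apply HW; auto. }
  destruct (core_ext (nP p) (phP p) (l ++ L0) m0 Hl C1 C2) as [m [psi [Hm0 [Hnm [Hl' [Href [Hcons Hsep]]]]]]].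
  assert (hv : valid m psi (fun x y => FP p x y \/ In (x,y) L0)).
  { split; [auto|split; [|split; [|split]]].
    - exists (l ++ L0). exact HW.
    - intros x y [h|h]; [auto|apply H0; auto].
    - intros x y h. apply Hcons, HW, h.
    - intros x y x' y' h1 h2 ha. apply Hsep; auto; apply HW; auto. }
  exists (mk m psi _ hv).
  refine (conj (conj Hnm (conj Href _)) (conj Hm0 _)).
  all: intros u v h; unfold FP; simpl; auto.
Qed.

Lemma stepL p k : exists q, le q p /\ k <= nP q.
Proof.
  destruct (cond_ext p [] k) as [q [h1 [h2 _]]]; simpl; try tauto.
  - intros x y x' y' [h|[]] [h'|[]]. eapply F_PB; eauto.
  - eauto.
Qed.

Lemma stepA p a x0 : A a x0 -> exists q, le q p /\ exists y, FP q x0 y.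
Proof.
  intro Ha.
  destruct (classic (exists y, FP p x0 y)) as [h|h]. { exists p; split; auto using le_refl. }
  destruct (vP p) as [[V1 [V2 [V3 V4]]] [[l Hw] [V6 [V7 V8]]]].
  destruct (dense_avoid (B a) (proj2 (hB a)) (map snd l) (phP p x0) (nP p)) as [y0 [Hy0 [Ay Ny]]].
  destruct (cond_ext p [(x0,y0)] 0) as [q [h1 [_ h3]]].
  - intros x y [E|[]]. injection E as E1 E2; subst x y. split; eauto. apply agree_sym; auto.
  - intros x y x' y' [H1|[E1|[]]] [H2|[E2|[]]].
    + eapply F_PB; eauto.
    + injection E2 as E3 E4; subst x' y'. split; intro E.
      * rewrite E in H1. exfalso; eauto.
      * rewrite E in H1. exfalso; apply Ny. apply in_map_iff. exists (x,y0); split; auto. apply Hw; auto.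
    + injection E1 as E5 E6; subst x y. split; intro E.
      * rewrite <- E in H2. exfalso; eauto.
      * rewrite <- E in H2. exfalso; apply Ny. apply in_map_iff. exists (x',y0); split; auto. apply Hw; auto.
    + injection E1 as E5 E6; subst x y. injection E2 as E3 E4; subst x' y'. tauto.
  - exists q. split; auto. exists y0. apply h3. now left.
Qed.

Lemma stepB p a y0 : B a y0 -> exists q, le q p /\ exists x, FP q x y0.
Proof.
  intro Hb.
  destruct (classic (exists x, FP p x y0)) as [h|h]. { exists p; split; auto using le_refl. }
  destruct (vP p) as [[V1 [V2 [V3 V4]]] [[l Hw] [V6 [V7 V8]]]].
  destruct (V3 y0) as [z Hz].
  destruct (dense_avoid (A a) (proj2 (hA a)) (map fst l) z (nP p)) as [x0 [Hx0 [Ax Nx]]].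
  assert (Ex : phP p x0 = phP p z) by (apply V1; auto).
  destruct (cond_ext p [(x0,y0)] 0) as [q [h1 [_ h3]]].
  - intros x y [E|[]]. injection E as E1 E2; subst x y. split; eauto. rewrite Ex; auto.
  - intros x y x' y' [H1|[E1|[]]] [H2|[E2|[]]].
    + eapply F_PB; eauto.
    + injection E2 as E3 E4; subst x' y'. split; intro E.
      * rewrite E in H1. exfalso; apply Nx. apply in_map_iff. exists (x0,y); split; auto. apply Hw; auto.
      * rewrite E in H1. exfalso; eauto.
    + injection E1 as E5 E6; subst x y. split; intro E.
      * rewrite <- E in H2. exfalso; apply Nx. apply in_map_iff. exists (x0,y'); split; auto. apply Hw; auto.
      * rewrite <- E in H2. exfalso; eauto.
    + injection E1 as E5 E6; subst x y. injection E2 as E3 E4; subst x' y'. tauto.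
  - exists q. split; auto. exists x0. apply h3. now left.
Qed.

Definition Dn (j : K * nat) (p : P) : Prop :=
  let a := fst j in let k := snd j in
  k <= nP p /\ (A a (eA a k) -> exists y, FP p (eA a k) y) /\
  (B a (eB a k) -> exists x, FP p x (eB a k)).

Lemma Dn_dense j : dense_in P le (Dn j).
Proof.
  destruct j as [a k]. intro p. unfold Dn; simpl.
  assert (exists q1, le q1 p /\ (A a (eA a k) -> exists y, FP q1 (eA a k) y)) as [q1 [l1 h1]].
  { destruct (classic (A a (eA a k))) as [h|h].
    - destruct (stepA p a _ h) as [q [? ?]]. exists q; auto.
    - exists p; split; [apply le_refl|tauto]. }
  assert (exists q2, le q2 q1 /\ (B a (eB a k) -> exists x, FP q2 x (eB a k))) as [q2 [l2 h2]].
  { destruct (classic (B a (eB a k))) as [h|h].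
    - destruct (stepB q1 a _ h) as [q [? ?]]. exists q; auto.
    - exists q1; split; [apply le_refl|tauto]. }
  destruct (stepL q2 k) as [q3 [l3 h3]].
  exists q3. split; [split; [auto|split]|].
  - intro h. destruct (h1 h) as [y hy]. exists y. apply l3, l2, hy.
  - intro h. destruct (h2 h) as [x hx]. exists x. apply l3, hx.
  - eapply le_trans; [exact l3|]. eapply le_trans; eauto.
Qed.

Definition Rel n (u : Cantor * Cantor) (t : list bool * nat * nat) : Prop :=
  fst (fst t) = pre (fst u) n /\ exists a, A a (fst u) /\ B a (snd u) /\
    snd (fst t) = idxA a (fst u) /\ snd t = idxB a (snd u).

Definition Cl (k : nat) (p : P) : Prop :=
  exists l T, (forall x y, FP p x y <-> In (x,y) l) /\ Forall2 (Rel (nP p)) l T /\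
    PK.pk (nP p, table (nP p) (phP p), T) = k.

Lemma build_T n (l : list (Cantor * Cantor)) :
  (forall u, In u l -> exists a, A a (fst u) /\ B a (snd u)) -> exists T, Forall2 (Rel n) l T.
Proof.
  induction l as [|u l IH]; intro H.
  - exists []; constructor.
  - destruct IH as [T HT]. { intros v hv; apply H; now right. }
    destruct (H u (or_introl eq_refl)) as [a [ha hb]].
    exists ((pre (fst u) n, idxA a (fst u), idxB a (snd u)) :: T). constructor; auto.
    split; [reflexivity|]. exists a. repeat split; auto.
Qed.

Lemma Cl_cover p : exists k, Cl k p.
Proof.
  destruct (vP p) as [_ [[l Hw] [V6 _]]].
  destruct (build_T (nP p) l) as [T HT].
  { intros [x y] h. apply V6, Hw, h. }
  eexists. exists l, T. split; [exact Hw|split; [exact HT|reflexivity]].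
Qed.

Lemma F2_l {X Y} (R : X -> Y -> Prop) l T u : Forall2 R l T -> In u l -> exists t, In t T /\ R u t.
Proof.
  induction 1; simpl; [tauto|]. intros [<-|h]; [eauto|]. destruct (IHForall2 h) as [t [? ?]]; eauto.
Qed.
Lemma F2_r {X Y} (R : X -> Y -> Prop) l T t : Forall2 R l T -> In t T -> exists u, In u l /\ R u t.
Proof.
  induction 1; simpl; [tauto|]. intros [<-|h]; [eauto|]. destruct (IHForall2 h) as [u [? ?]]; eauto.
Qed.

Lemma Cl_same k p q : Cl k p -> Cl k q -> nP p = nP q /\ forall x, agree (nP p) (phP p x) (phP q x).
Proof.
  intros [l [T [_ [_ Hk]]]] [l' [T' [_ [_ Hk']]]].
  rewrite <- Hk' in Hk. apply PK.pk_inj in Hk. injection Hk as E1 E2 E3.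
  split; auto. rewrite <- E1 in E2.
  apply table_agree; auto. apply vP. rewrite E1. apply vP.
Qed.

Lemma Cl_key k p q x y x' y' : Cl k p -> Cl k q -> FP p x y -> FP q x' y' ->
  agree (nP p) x x' -> (x = x' -> y = y') /\ (y = y' -> x = x').
Proof.
  intros Cp Cq Hp Hq Ha.
  destruct (Cl_same k p q Cp Cq) as [En _].
  destruct Cp as [l [T [Hw [HT Hk]]]]. destruct Cq as [l' [T' [Hw' [HT' Hk']]]].
  rewrite <- Hk' in Hk. apply PK.pk_inj in Hk. injection Hk as _ _ ET. subst T'.
  destruct (F2_l _ _ _ _ HT (proj1 (Hw x y) Hp)) as [t [Ht [R1 [a [ha1 [hb1 [hi1 hj1]]]]]]].
  destruct (F2_r _ _ _ _ HT' Ht) as [[x'' y''] [Hin [R2 [a' [ha2 [hb2 [hi2 hj2]]]]]]].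
  simpl in *.
  assert (Fq : FP q x'' y'') by (apply Hw'; auto).
  destruct (vP q) as [_ [_ [_ [_ V8]]]].
  assert (agree (nP q) x'' x') as Hq''.
  { rewrite <- En. eapply agree_trans; [|exact Ha]. apply agree_pre. congruence. }
  destruct (V8 _ _ _ _ Fq Hq Hq'') as [<- <-].
  split.
  - intros <-. assert (a = a') as <- by (eapply colA; eauto).
    rewrite <- (idxB_spec a y hb1), <- (idxB_spec a y'' hb2). congruence.
  - intros <-. assert (a = a') as <- by (eapply colB; eauto).
    rewrite <- (idxA_spec a x ha1), <- (idxA_spec a x'' ha2). congruence.
Qed.

Lemma Cl_PB k p q x y x' y' : Cl k p -> Cl k q -> FP p x y -> FP q x' y' -> (x = x' <-> y = y').
Proof.
  intros Cp Cq Hp Hq. split.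
  - intro E. apply (Cl_key k p q x y x' y'); auto. rewrite E; apply agree_refl.
  - intro E. apply (Cl_key k p q x y x' y'); auto.
    destruct (Cl_same k p q Cp Cq) as [En Eph].
    destruct (vP p) as [[_ [_ [_ V4]]] [_ [_ [V7 _]]]].
    destruct (vP q) as [_ [_ [_ [W7 _]]]].
    apply V4. eapply agree_trans; [apply V7; eauto|].
    apply agree_sym. eapply agree_trans; [apply Eph|]. rewrite En. rewrite E. apply W7; auto.
Qed.

Lemma sc : sigma_centered P le.
Proof.
  exists Cl. split; [exact Cl_cover|].
  intros k ls Hls. destruct ls as [|p1 rest].
  - exists p0. intros p [].
  - set (wit := fun p : P => proj1_sig (constructive_indefinite_description _ (proj1 (proj2 (vP p))))).
    assert (Hwit : forall p x y, FP p x y <-> In (x,y) (wit p)).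
    { intro p. exact (proj2_sig (constructive_indefinite_description _ (proj1 (proj2 (vP p))))). }
    set (L0 := flat_map wit (p1 :: rest)).
    assert (HL0 : forall x y, In (x,y) L0 <-> exists p, In p (p1 :: rest) /\ FP p x y).
    { intros x y. unfold L0. rewrite in_flat_map. split; intros [p [h1 h2]]; exists p; split; auto; apply Hwit; auto. }
    assert (C1 : Cl k p1) by (apply Hls; now left).
    assert (U : forall x y, FP p1 x y \/ In (x,y) L0 -> exists p, In p (p1 :: rest) /\ FP p x y).
    { intros x y [h|h]. exists p1; split; auto; now left. apply HL0, h. }
    destruct (cond_ext p1 L0 0) as [q [hq1 [_ hq3]]].
    + intros x y h. apply HL0 in h as [p [hp hF]].
      destruct (vP p) as [_ [_ [V6 [V7 _]]]]. split; [eauto|].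
      destruct (Cl_same k p1 p C1 (Hls p hp)) as [En Eph].
      eapply agree_trans; [apply Eph|]. rewrite En. auto.
    + intros x y x' y' h1 h2. destruct (U _ _ h1) as [p [hp hF]]. destruct (U _ _ h2) as [p' [hp' hF']].
      eapply Cl_PB; [apply (Hls p hp)|apply (Hls p' hp')|eauto|eauto].
    + exists q. intros p hp.
      destruct (Cl_same k p1 p C1 (Hls p hp)) as [En Eph].
      destruct hq1 as [a1 [b1 c1]]. split; [|split].
      * lia.
      * intro x. rewrite <- En. eapply agree_trans; [apply b1|apply Eph].
      * intros x y h. apply hq3, HL0. eauto.
Qed.

Lemma main_inh (MA : MA_sigma_centered) (hK : lt_continuum K) (a0 : K) :
  exists f : Cantor -> Cantor, homeomorphism f /\
    forall a (y : Cantor), image f (A a) y <-> B a y.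
Proof.
  destruct (MA P le (inhabits p0) poset sc (K * nat)%type Dn (lt_continuum_prod K hK) Dn_dense)
    as [G [[_ [_ Gdir]] HG]].
  set (pk := fun k => proj1_sig (constructive_indefinite_description _ (HG (a0, S k)))).
  assert (Hpk : forall k, G (pk k) /\ S k <= nP (pk k)).
  { intro k. destruct (proj2_sig (constructive_indefinite_description _ (HG (a0, S k)))) as [h1 [h2 _]].
    split; auto. }
  set (psi := fun p y => proj1_sig (constructive_indefinite_description _ (proj1 (proj2 (proj2 (proj1 (vP p)))) y))).
  assert (Hpsi : forall p y, agree (nP p) (phP p (psi p y)) y).
  { intros p y. exact (proj2_sig (constructive_indefinite_description _ (proj1 (proj2 (proj2 (proj1 (vP p)))) y))). }
  assert (compat : forall p q, G p -> G q -> nP p <= nP q -> forall x, agree (nP p) (phP p x) (phP q x)).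
  { intros p q hp hq hle x. destruct (Gdir p q hp hq) as [r [_ [[_ [b1 _]] [_ [b2 _]]]]].
    eapply agree_trans; [apply agree_sym, b1|]. eapply agree_mono; [exact hle|apply b2]. }
  assert (compatm : forall p q, G p -> G q -> forall x, agree (min (nP p) (nP q)) (phP p x) (phP q x)).
  { intros p q hp hq x. destruct (Nat.le_ge_cases (nP p) (nP q)) as [h|h].
    - rewrite Nat.min_l by auto. auto.
    - rewrite Nat.min_r by auto. apply agree_sym; auto. }
  assert (psicompat : forall p q, G p -> G q -> nP p <= nP q -> forall y, agree (nP p) (psi p y) (psi q y)).
  { intros p q hp hq hle y. destruct (vP p) as [[V1 [_ [_ V4]]] _].
    apply V4. eapply agree_trans; [apply Hpsi|].
    apply agree_sym. eapply agree_trans; [apply compat; eauto|].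
    eapply agree_mono; [exact hle|apply Hpsi]. }
  assert (psicompatm : forall p q, G p -> G q -> forall y, agree (min (nP p) (nP q)) (psi p y) (psi q y)).
  { intros p q hp hq y. destruct (Nat.le_ge_cases (nP p) (nP q)) as [h|h].
    - rewrite Nat.min_l by auto. auto.
    - rewrite Nat.min_r by auto. apply agree_sym; auto. }
  set (f := fun x k => phP (pk k) x k).
  set (g := fun y k => psi (pk k) y k).
  assert (fG : forall p, G p -> forall x, agree (nP p) (phP p x) (f x)).
  { intros p hp x k hk. unfold f. destruct (Hpk k) as [h1 h2].
    apply (compatm p (pk k) hp h1 x). apply Nat.min_glb_lt; lia. }
  assert (gG : forall p, G p -> forall y, agree (nP p) (psi p y) (g y)).
  { intros p hp y k hk. unfold g. destruct (Hpk k) as [h1 h2].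
    apply (psicompatm p (pk k) hp h1 y). apply Nat.min_glb_lt; lia. }
  assert (FG : forall p x y, G p -> FP p x y -> f x = y).
  { intros p x y hp hF. apply functional_extensionality; intro k.
    destruct (Hpk k) as [h1 h2].
    destruct (Gdir p (pk k) hp h1) as [r [hr [[_ [_ c1]] [a2 _]]]].
    destruct (vP r) as [_ [_ [_ [V7 _]]]].
    assert (Fr : FP r x y) by auto.
    rewrite <- (fG r hr x k) by lia. apply V7; auto; lia. }
  exists f. split.
  - exists g. split; [|split; [|split]].
    + intro x. apply functional_extensionality; intro k. destruct (Hpk k) as [h1 h2].
      set (p := pk k) in *. destruct (vP p) as [[V1 [_ [_ V4]]] _].
      assert (agree (nP p) (g (f x)) x) as HH; [|apply HH; lia].
      apply (agree_trans _ _ (psi p (f x))); [apply agree_sym, gG; auto|].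
      apply V4. eapply agree_trans; [apply Hpsi|]. apply agree_sym, fG; auto.
    + intro y. apply functional_extensionality; intro k. destruct (Hpk k) as [h1 h2].
      set (p := pk k) in *. destruct (vP p) as [[V1 [_ [_ V4]]] _].
      assert (agree (nP p) (f (g y)) y) as HH; [|apply HH; lia].
      apply (agree_trans _ _ (phP p (g y))); [apply agree_sym, fG; auto|].
      rewrite <- (V1 (psi p y) (g y)) by (apply gG; auto). apply Hpsi.
    + intros x n. destruct (Hpk n) as [h1 h2]. set (p := pk n) in *.
      destruct (vP p) as [[V1 _] _]. exists (nP p). intros y Ha.
      apply (agree_mono n (nP p)); [lia|].
      eapply agree_trans; [apply agree_sym, fG; auto|]. rewrite (V1 x y Ha). apply fG; auto.
    + intros x n. destruct (Hpk n) as [h1 h2]. set (p := pk n) in *.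
      destruct (vP p) as [[V1 [_ [_ V4]]] _]. exists (nP p). intros y Ha.
      apply (agree_mono n (nP p)); [lia|].
      eapply agree_trans; [apply agree_sym, gG; auto|]. eapply agree_trans; [|apply gG; auto].
      apply V4. eapply agree_trans; [apply Hpsi|]. eapply agree_trans; [exact Ha|]. apply agree_sym, Hpsi.
  - intros a y. split.
    + intros [x [Hx <-]].
      destruct (proj2_sig (constructive_indefinite_description _ (proj1 (hA a))) x Hx) as [i Hi].
      fold (eA a) in Hi. destruct (HG (a, i)) as [p [hp [_ [hD _]]]]. simpl in hD.
      rewrite Hi in hD. destruct (hD Hx) as [y' hy'].
      destruct (vP p) as [_ [_ [V6 _]]]. destruct (V6 _ _ hy') as [b [hb1 hb2]].
      assert (b = a) as -> by (eapply colA; eauto).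
      rewrite (FG p x y' hp hy'). auto.
    + intro Hy.
      destruct (proj2_sig (constructive_indefinite_description _ (proj1 (hB a))) y Hy) as [i Hi].
      fold (eB a) in Hi. destruct (HG (a, i)) as [p [hp [_ [_ hD]]]]. simpl in hD.
      rewrite Hi in hD. destruct (hD Hy) as [x hx].
      destruct (vP p) as [_ [_ [V6 _]]]. destruct (V6 _ _ hx) as [b [hb1 hb2]].
      assert (b = a) as -> by (eapply colB; eauto).
      exists x. split; auto. eapply FG; eauto.
Qed.
End Main.

Theorem theorem2p1 (MA : MA_sigma_centered)
  (K : Type) (hK : lt_continuum K)
  (A B : K -> Cantor -> Prop)
  (hA : forall a, countable (A a) /\ dense (A a))
  (hB : forall a, countable (B a) /\ dense (B a))
  (hAdisj : forall a b, a <> b -> forall x, A a x -> A b x -> False)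
  (hBdisj : forall a b, a <> b -> forall x, B a x -> B b x -> False) :
  exists f : Cantor -> Cantor, homeomorphism f /\
    forall a (y : Cantor), image f (A a) y <-> B a y.
Proof.
  destruct (classic (inhabited K)) as [[a0]|hne].
  - exact (main_inh K A B hA hB hAdisj hBdisj MA hK a0).
  - exists (fun x => x). split.
    + exists (fun x => x). split; [|split; [|split]]; auto;
      intros x n; exists n; auto.
    + intro a. exfalso. apply hne. exact (inhabits a).
Qed.
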